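(* Let $f:X\to Y$ and $g:X'\to Y'$ be morphisms in $\mathcal{C}_{\mathcal{I}}^J(\mathcal{P}(\Lambda))$ such that $f$ is isomorphic to $g$ in $\mathcal{K}_{\mathcal{I}}^J(\mathcal{P}(\Lambda))$, i.e. there are isomorphisms $\alpha:X\to X'$ and $\beta:Y\to Y'$ in $\mathcal{K}_{\mathcal{I}}^J(\mathcal{P}(\Lambda))$ with $[g]\alpha=\beta[f]$. Then: (a) if $f$ is smonic, then $g$ is smonic; (b) if $f$ is sepic, then $g$ is sepic; (c) if $f$ and $g$ are irreducible and $f$ is sirreducible, then $g$ is sirreducible.
   Context: $\Lambda$ is a finite-dimensional non-semisimple algebra over a field $k$, $\mathcal{P}(\Lambda)$ the category of finitely generated projective right $\Lambda$-modules; $\mathcal{I}$ is the ideal of radical morphisms (those whose image lies in the radical of the target). For an interval $J\subseteq\mathbb{Z}$, $\mathcal{C}_{\mathcal{I}}^J(\mathcal{P}(\Lambda))$ is the category of cochain complexes of finitely generated projective $\Lambda$-modules vanishing outside $J$ with radical differentials, and $\mathcal{K}_{\mathcal{I}}^J(\mathcal{P}(\Lambda))$ its homotopy category; $[f]$ denotes the homotopy class of $f$. A morphism of complexes $f=(f^n)$ is smonic if all $f^n$ are split monomorphisms, sepic if all $f^n$ are split epimorphisms, and sirreducible if there is exactly one index $i_0$ with $f^{i_0}$ irreducible in $\mathcal{P}(\Lambda)$, $f^n$ a split epimorphism for $n<i_0$ and a split monomorphism for $n>i_0$. *)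

(* Defs.v *)
From HB Require Import structures.
From mathcomp Require Import all_boot all_order all_algebra all_field.
Set Implicit Arguments. Unset Strict Implicit. Unset Printing Implicit Defensive.
Import Order.TTheory GRing.Theory Num.Theory.
Local Open Scope ring_scope.

(* A finitely generated right A-module of k-dimension m is encoded by row
   vectors 'rV[k]_m with right action  v . a := v *m rho a. *)

Section Modules.
Variables (k : fieldType) (A : falgType k).

Definition is_rmod (m : nat) (rho : A -> 'M[k]_m) : Prop :=
  [/\ forall a b, rho (a + b) = rho a + rho b,
      forall (c : k) a, rho (c *: a) = c *: rho a,
      rho 1 = 1%:M &
      forall a b, rho (a * b) = rho a *m rho b].

Definition is_hom m n (rM : A -> 'M[k]_m) (rN : A -> 'M[k]_n)
  (F : 'M[k]_(m, n)) : Prop := forall a, rM a *m F = F *m rN a.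

Definition is_projective m (rP : A -> 'M[k]_m) : Prop :=
  forall n n' (rN : A -> 'M[k]_n) (rN' : A -> 'M[k]_n')
         (p : 'M[k]_(n, n')) (h : 'M[k]_(m, n')),
    is_rmod rN -> is_rmod rN' -> is_hom rN rN' p -> row_full p ->
    is_hom rP rN' h ->
    exists l : 'M[k]_(m, n), is_hom rP rN l /\ l *m p = h.

(* submodule = row space of U stable under the action *)
Definition is_submod n (rN : A -> 'M[k]_n) (U : 'M[k]_n) : Prop :=
  forall a, (U *m rN a <= U)%MS.

(* semisimple algebra: every (f.g.) module is semisimple, i.e. every
   submodule has a complementary submodule *)
Definition semisimple_alg : Prop :=
  forall m (rM : A -> 'M[k]_m), is_rmod rM ->
  forall U : 'M[k]_m, is_submod rM U ->
  exists V : 'M[k]_m, is_submod rM V /\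
    (U + V == 1%:M)%MS /\ (U :&: V == (0 : 'M[k]_m))%MS.

Definition maximal_submod n (rN : A -> 'M[k]_n) (U : 'M[k]_n) : Prop :=
  [/\ is_submod rN U, ~~ (1%:M <= U)%MS &
      forall V : 'M[k]_n, is_submod rN V -> (U <= V)%MS ->
        (V == U)%MS \/ (1%:M <= V)%MS].

(* radical morphism: image contained in rad N = intersection of the maximal
   submodules of N *)
Definition radical_hom m n (rN : A -> 'M[k]_n) (F : 'M[k]_(m, n)) : Prop :=
  forall U : 'M[k]_n, maximal_submod rN U -> (F <= U)%MS.

Definition split_mono m n (rM : A -> 'M[k]_m) (rN : A -> 'M[k]_n)
  (F : 'M[k]_(m, n)) : Prop :=
  exists R : 'M[k]_(n, m), is_hom rN rM R /\ F *m R = 1%:M.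

Definition split_epi m n (rM : A -> 'M[k]_m) (rN : A -> 'M[k]_n)
  (F : 'M[k]_(m, n)) : Prop :=
  exists S : 'M[k]_(n, m), is_hom rN rM S /\ S *m F = 1%:M.

Definition irreducible_P m n (rM : A -> 'M[k]_m) (rN : A -> 'M[k]_n)
  (F : 'M[k]_(m, n)) : Prop :=
  [/\ is_hom rM rN F, ~ split_mono rM rN F, ~ split_epi rM rN F &
      forall p (rZ : A -> 'M[k]_p) (G : 'M[k]_(m, p)) (H : 'M[k]_(p, n)),
        is_rmod rZ -> is_projective rZ -> is_hom rM rZ G -> is_hom rZ rN H ->
        F = G *m H -> split_mono rM rZ G \/ split_epi rZ rN H].

Definition is_interval (J : pred int) : Prop :=
  forall a b c : int, a \in J -> c \in J -> a <= b -> b <= c -> b \in J.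

(* objects of C_I^J(P(A)): cochain complexes of f.g. projectives vanishing
   outside J, with radical differentials *)
Record cplx (J : pred int) := Cplx {
  cdim : int -> nat;
  cact : forall n : int, A -> 'M[k]_(cdim n);
  cd : forall n : int, 'M[k]_(cdim n, cdim (n + 1));
  cact_rmod : forall n, is_rmod (cact n);
  cact_proj : forall n, is_projective (cact n);
  cvanish : forall n, n \notin J -> cdim n = 0%N;
  cd_hom : forall n, is_hom (cact n) (cact (n + 1)) (cd n);
  cd_rad : forall n, radical_hom (cact (n + 1)) (cd n);
  cdd : forall n, cd n *m cd (n + 1) = 0
}.

Definition cmor J (X Y : cplx J) := forall n : int, 'M[k]_(cdim X n, cdim Y n).

Definition chain_map J (X Y : cplx J) (f : cmor X Y) : Prop :=
  (forall n, is_hom (cact X n) (cact Y n) (f n)) /\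
  (forall n, cd X n *m f (n + 1) = f n *m cd Y n).

Definition ccomp J (X Y Z : cplx J) (f : cmor X Y) (g : cmor Y Z) : cmor X Z :=
  fun n => f n *m g n.

Definition cid J (X : cplx J) : cmor X X := fun n => 1%:M.

(* f - g = d s + s d, with s^n : X^(n+1) -> Y^n (written at degree n+1) *)
Definition homotopic J (X Y : cplx J) (f g : cmor X Y) : Prop :=
  exists s : forall n : int, 'M[k]_(cdim X (n + 1), cdim Y n),
    (forall n, is_hom (cact X (n + 1)) (cact Y n) (s n)) /\
    (forall n, f (n + 1) - g (n + 1) = cd X (n + 1) *m s (n + 1) + s n *m cd Y n).

(* f is (the representative of) an isomorphism in K_I^J(P(A)) *)
Definition iso_K J (X Y : cplx J) (f : cmor X Y) : Prop :=
  chain_map f /\ exists f' : cmor Y X, chain_map f' /\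
    homotopic (ccomp f f') (cid X) /\ homotopic (ccomp f' f) (cid Y).

Definition smonic J (X Y : cplx J) (f : cmor X Y) : Prop :=
  forall n, split_mono (cact X n) (cact Y n) (f n).

Definition sepic J (X Y : cplx J) (f : cmor X Y) : Prop :=
  forall n, split_epi (cact X n) (cact Y n) (f n).

Definition split_mono_C J (X Y : cplx J) (f : cmor X Y) : Prop :=
  exists r : cmor Y X, chain_map r /\ forall n, f n *m r n = 1%:M.

Definition split_epi_C J (X Y : cplx J) (f : cmor X Y) : Prop :=
  exists s : cmor Y X, chain_map s /\ forall n, s n *m f n = 1%:M.

Definition irreducible_C J (X Y : cplx J) (f : cmor X Y) : Prop :=
  [/\ chain_map f, ~ split_mono_C f, ~ split_epi_C f &
      forall (Z : cplx J) (u : cmor X Z) (v : cmor Z Y),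
        chain_map u -> chain_map v -> (forall n, f n = u n *m v n) ->
        split_mono_C u \/ split_epi_C v].

Definition sirreducible J (X Y : cplx J) (f : cmor X Y) : Prop :=
  exists i0 : int,
    [/\ forall n, irreducible_P (cact X n) (cact Y n) (f n) <-> n = i0,
        forall n, n < i0 -> split_epi (cact X n) (cact Y n) (f n) &
        forall n, i0 < n -> split_mono (cact X n) (cact Y n) (f n)].

End Modules.

(* Main.v *)
Require Import Defs.
From HB Require Import structures.
From mathcomp Require Import all_boot all_order all_algebra all_field.
From Stdlib Require Import Classical.
From mathcomp Require Import zify.
Set Implicit Arguments. Unset Strict Implicit. Unset Printing Implicit Defensive.
Import Order.TTheory GRing.Theory Num.Theory.
Local Open Scope ring_scope.

Section Aux.
Variables (k : fieldType) (A : falgType k).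

Lemma hom_mul m n p (rM : A -> 'M[k]_m) (rN : A -> 'M[k]_n) (rP : A -> 'M[k]_p)
  (F : 'M_(m,n)) (G : 'M_(n,p)) :
  is_hom rM rN F -> is_hom rN rP G -> is_hom rM rP (F *m G).
Proof. by move=> hF hG a; rewrite mulmxA hF -!mulmxA hG. Qed.

Lemma hom_add m n (rM : A -> 'M[k]_m) (rN : A -> 'M[k]_n) (F G : 'M_(m,n)) :
  is_hom rM rN F -> is_hom rM rN G -> is_hom rM rN (F + G).
Proof. by move=> hF hG a; rewrite mulmxDr mulmxDl hF hG. Qed.

Lemma hom_opp m n (rM : A -> 'M[k]_m) (rN : A -> 'M[k]_n) (F : 'M_(m,n)) :
  is_hom rM rN F -> is_hom rM rN (- F).
Proof. by move=> hF a; rewrite mulmxN mulNmx hF. Qed.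

Lemma hom_sub m n (rM : A -> 'M[k]_m) (rN : A -> 'M[k]_n) (F G : 'M_(m,n)) :
  is_hom rM rN F -> is_hom rM rN G -> is_hom rM rN (F - G).
Proof. by move=> hF hG; apply: hom_add => //; apply: hom_opp. Qed.

Lemma hom1 m (rM : A -> 'M[k]_m) : is_hom rM rM 1%:M.
Proof. by move=> a; rewrite mulmx1 mul1mx. Qed.

Lemma hom_inv m (rM : A -> 'M[k]_m) (u : 'M_m) :
  is_hom rM rM u -> u \in unitmx -> is_hom rM rM (invmx u).
Proof.
move=> hu uu a.
rewrite -[invmx u *m rM a]mulmx1 -(mulmxV uu) !mulmxA -[invmx u *m rM a *m u]mulmxA.
by rewrite hu mulmxA mulVmx // mul1mx.
Qed.

Lemma rad_mull m n p (rP : A -> 'M[k]_p) (F : 'M_(n,p)) (L : 'M_(m,n)) :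
  radical_hom rP F -> radical_hom rP (L *m F).
Proof. by move=> hF U hU; exact: submx_trans (submxMl _ _) (hF U hU). Qed.

Lemma rad_add m p (rP : A -> 'M[k]_p) (F G : 'M_(m,p)) :
  radical_hom rP F -> radical_hom rP G -> radical_hom rP (F + G).
Proof. by move=> hF hG U hU; apply: addmx_sub; [exact: hF | exact: hG]. Qed.

Lemma rad_opp m p (rP : A -> 'M[k]_p) (F : 'M_(m,p)) :
  radical_hom rP F -> radical_hom rP (- F).
Proof. by move=> hF U hU; rewrite eqmx_opp; exact: hF. Qed.

Lemma rad_mulr m n p (rN : A -> 'M[k]_n) (rP : A -> 'M[k]_p) (F : 'M_(m,n)) (G : 'M_(n,p)) :
  is_hom rN rP G -> radical_hom rN F -> radical_hom rP (F *m G).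
Proof.
move=> hG hF U [sU nU maxU].
pose V := kermx (G *m cokermx U).
have subV : forall m' (B : 'M_(m', n)), (B <= V)%MS = (B *m G <= U)%MS.
  by move=> m' B; rewrite sub_kermx submxE mulmxA.
rewrite -subV.
have sV : is_submod rN V.
  move=> a; rewrite subV -mulmxA hG mulmxA.
  apply: submx_trans (sU a); apply: submxMr; by rewrite -subV.
have [h1|h1] := boolP (1%:M <= V)%MS; first exact: submx_trans (submx1 _) h1.
apply: hF; split => // W sW VW.
pose W' := (W *m G + U)%MS.
have sW' : is_submod rP W'.
  move=> a; rewrite addsmxMr; apply: addsmxS; last exact: sU.
  by rewrite -mulmxA -hG mulmxA; apply: submxMr; exact: sW.
have UW' : (U <= W')%MS by exact: addsmxSr.
case: (maxU W' sW' UW') => [eW'|fW'].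
  left; apply/andP; split => //.
  rewrite subV; case/andP: eW' => h _; apply: submx_trans h.
  exact: addsmxSl.
right.
have : (G <= W')%MS by exact: submx_trans (submx1 _) fW'.
case/sub_addsmxP => u eG.
have h2 : ((1%:M - u.1 *m W) <= V)%MS.
  rewrite subV mulmxBl mul1mx {1}eG addrAC mulmxA subrr add0r; exact: submxMl.
rewrite -(subrK (u.1 *m W) 1%:M); apply: addmx_sub; last exact: submxMl.
exact: submx_trans h2 VW.
Qed.

Lemma exists_max m (rM : A -> 'M[k]_m) : forall n (W : 'M_m),
  (m - \rank W < n)%N -> is_submod rM W -> ~~ (1%:M <= W)%MS ->
  exists U, maximal_submod rM U /\ (W <= U)%MS.
Proof.
elim=> // n IH W hn sW nW.
case: (classic (exists V : 'M_m, [/\ is_submod rM V, (W <= V)%MS, ~~ (V == W)%MS &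
   ~~ (1%:M <= V)%MS])) => [[V [sV WV nVW nV]]|none].
  have lt : (W < V)%MS.
    rewrite ltmxEneq WV /=; apply/negP => VW; move/negP: nVW; apply; by rewrite VW WV.
  move: lt; rewrite ltmxErank => /andP [_ lt].
  have hV := rank_leq_col V.
  have [U [mU VU]] := IH V ltac:(lia) sV nV.
  by exists U; split => //; exact: submx_trans WV VU.
exists W; split => //; split => // V sV WV.
have [e|ne] := boolP (V == W)%MS; first by left.
have [f|nf] := boolP (1%:M <= V)%MS; first by right.
by exfalso; apply: none; exists V.
Qed.

Lemma unit_1rad m (rM : A -> 'M[k]_m) (r : 'M_m) :
  is_hom rM rM r -> radical_hom rM r -> (1%:M + r) \in unitmx.
Proof.
move=> hr rr; rewrite -row_full_unit; apply/negPn/negP => nf.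
have hS : is_hom rM rM (1%:M + r) by apply: hom_add => //; exact: hom1.
have sS : is_submod rM (1%:M + r) by move=> a; rewrite -hS; exact: submxMl.
have [U [mU SU]] := @exists_max m rM m.+1 (1%:M + r) ltac:(rewrite ltnS; exact: leq_subr) sS
  ltac:(by rewrite sub1mx).
case: (mU) => _ nU _; move/negP: nU; apply.
rewrite -(addrK r 1%:M); apply: addmx_sub => //; rewrite eqmx_opp; exact: rr.
Qed.

End Aux.

Section Aux2.
Variables (k : fieldType) (A : falgType k).

Lemma homotopic_rad J (X Y : cplx A J) (F G : cmor X Y) :
  homotopic F G -> forall m, radical_hom (cact Y m) (F m - G m).
Proof.
move=> [s [hs eq]].
have L : forall n, radical_hom (cact Y (n + 1)) (F (n + 1) - G (n + 1)).
  move=> n; rewrite eq; apply: rad_add; last by apply: rad_mull; exact: cd_rad.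
  apply: rad_mulr; first exact: hs.
  exact: cd_rad.
by move=> m; have := L (m - 1); rewrite subrK.
Qed.

Lemma iso_inv J (X Y : cplx A J) (a : cmor X Y) : iso_K a -> forall m,
  exists b : 'M_(cdim Y m, cdim X m),
    [/\ is_hom (cact Y m) (cact X m) b, a m *m b = 1%:M & b *m a m = 1%:M].
Proof.
move=> [[ha _] [a' [[ha' _] [h1 h2]]]] m.
have r1 := homotopic_rad h1 (m:=m); have r2 := homotopic_rad h2 (m:=m).
rewrite /ccomp /cid in r1 r2.
have hu : a m *m a' m \in unitmx.
  rewrite -[a m *m a' m](addrNK 1%:M) addrC; apply: (unit_1rad (rM := cact X m)) => //.
  apply: hom_sub; [exact: hom_mul | exact: hom1].
have hv : a' m *m a m \in unitmx.
  rewrite -[a' m *m a m](addrNK 1%:M) addrC; apply: (unit_1rad (rM := cact Y m)) => //.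
  apply: hom_sub; [exact: hom_mul | exact: hom1].
exists (a' m *m invmx (a m *m a' m)); split.
- apply: hom_mul => //; apply: hom_inv => //; exact: hom_mul.
- by rewrite mulmxA mulmxV.
- have e : invmx (a' m *m a m) *m a' m = a' m *m invmx (a m *m a' m).
    rewrite -[LHS]mulmx1 -(mulmxV hu) !mulmxA -[invmx _ *m a' m *m a m]mulmxA mulVmx //.
    by rewrite mul1mx.
  by rewrite -e -mulmxA mulVmx.
Qed.

Section Transfer.
Variables (m m' p p' : nat) (rM : A -> 'M[k]_m) (rM' : A -> 'M[k]_m')
  (rN : A -> 'M[k]_p) (rN' : A -> 'M[k]_p')
  (a : 'M[k]_(m,m')) (ai : 'M[k]_(m',m)) (b : 'M[k]_(p,p')) (bi : 'M[k]_(p',p))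
  (F : 'M[k]_(m,p)) (F' : 'M[k]_(m',p')).
Hypotheses (ha : is_hom rM rM' a) (hai : is_hom rM' rM ai)
  (aai : a *m ai = 1%:M) (aia : ai *m a = 1%:M)
  (hb : is_hom rN rN' b) (hbi : is_hom rN' rN bi)
  (bbi : b *m bi = 1%:M) (bib : bi *m b = 1%:M)
  (hF : is_hom rM rN F) (hF' : is_hom rM' rN' F')
  (re : radical_hom rN' (a *m F' - F *m b)).

Let e := a *m F' - F *m b.
Let he : is_hom rM rN' e.
Proof. by apply: hom_sub; apply: hom_mul. Qed.
Let eF' : F' = ai *m (F *m b + e).
Proof. by rewrite /e addrC subrK mulmxA aia mul1mx. Qed.

Lemma transfer_mono : split_mono rM rN F -> split_mono rM' rN' F'.
Proof.
move=> [R [hR FR]].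
pose r := e *m bi *m R.
have hr : is_hom rM rM r by apply: hom_mul => //; apply: hom_mul.
have rr : radical_hom rM r.
  by apply: rad_mulr => //; apply: rad_mulr => //.
have hu := unit_1rad hr rr.
exists (bi *m R *m invmx (1%:M + r) *m a); split.
  have h1 : is_hom rN' rM (bi *m R) by apply: (hom_mul (rN := rN)).
  have h3 : is_hom rM rM (invmx (1%:M + r)) by apply: hom_inv => //; apply: hom_add => //; exact: hom1.
  by apply: (hom_mul (rN := rM)) => //; apply: (hom_mul (rN := rM)).
have E : (F *m b + e) *m (bi *m R) = 1%:M + r.
  by rewrite mulmxDl /r !mulmxA -(mulmxA F) bbi mulmx1 FR.
rewrite eF' -mulmxA.
have -> : (F *m b + e) *m (bi *m R *m invmx (1%:M + r) *m a) =
  ((F *m b + e) *m (bi *m R)) *m invmx (1%:M + r) *m a by rewrite !mulmxA.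
by rewrite E mulmxV // mul1mx aia.
Qed.

Lemma transfer_epi : split_epi rM rN F -> split_epi rM' rN' F'.
Proof.
move=> [S [hS SF]].
pose w := bi *m S *m e.
have hw : is_hom rN' rN' w by apply: hom_mul => //; apply: hom_mul.
have rw : radical_hom rN' w by apply: rad_mull.
have hu := unit_1rad hw rw.
exists (invmx (1%:M + w) *m bi *m S *m a); split.
  have h3 : is_hom rN' rN' (invmx (1%:M + w)) by apply: hom_inv => //; apply: hom_add => //; exact: hom1.
  by apply: (hom_mul (rN := rM)) => //; apply: (hom_mul (rN := rN)) => //; apply: (hom_mul (rN := rN')).
have E : bi *m S *m (F *m b + e) = 1%:M + w.
  by rewrite mulmxDr /w -!mulmxA (mulmxA S) SF mul1mx bib.
rewrite eF'.
have -> : invmx (1%:M + w) *m bi *m S *m a *m (ai *m (F *m b + e)) =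
  invmx (1%:M + w) *m (bi *m S *m (a *m ai) *m (F *m b + e)) by rewrite !mulmxA.
by rewrite aai mulmx1 E mulVmx.
Qed.

Lemma rev_rad : radical_hom rN (ai *m F - F' *m bi).
Proof.
have -> : ai *m F - F' *m bi = - (ai *m (e *m bi)).
  rewrite /e mulmxBl mulmxBr opprB !mulmxA aia mul1mx -!mulmxA bbi mulmx1.
  by [].
by apply: rad_opp; apply: rad_mull; apply: rad_mulr.
Qed.

End Transfer.
End Aux2.

Section PI.
Variable (k : fieldType).
Definition pI a b : 'M[k]_(a, b) := pid_mx a.

Lemma pIK a b : (a <= b)%N -> pI a b *m pI b a = 1%:M.
Proof.
move=> ab; rewrite /pI mul_pid_mx.
have -> : minn b (minn a b) = a by rewrite (minn_idPl ab) (minn_idPr ab).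
exact: pid_mx_1.
Qed.

Lemma pIeq a b : a = b -> pI a b *m pI b a = 1%:M.
Proof. by move=> ->; apply: pIK. Qed.

Lemma pI_same a : pI a a = 1%:M.
Proof. exact: pid_mx_1. Qed.

Lemma mulpI_r a b c d (M : 'M[k]_(c, a)) (N : 'M[k]_(a, d)) : a = b -> M *m pI a b *m pI b a *m N = M *m N.
Proof. by move=> e; rewrite -(mulmxA M) pIeq // mulmx1. Qed.

Lemma mulpI_r' a b c (M : 'M[k]_(c, a)) : a = b -> M *m pI a b *m pI b a = M.
Proof. by move=> e; rewrite -(mulmxA M) pIeq // mulmx1. Qed.

Lemma mulpI_l a b d (N : 'M[k]_(a, d)) : a = b -> pI a b *m pI b a *m N = N.
Proof. by move=> e; rewrite pIeq // mul1mx. Qed.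
End PI.
Arguments pI {k} a b.

Section Conj.
Variables (k : fieldType) (A : falgType k).

Lemma conj_rmod m m' (rP : A -> 'M[k]_m) (t : 'M_(m',m)) (s : 'M_(m,m')) :
  s *m t = 1%:M -> t *m s = 1%:M -> is_rmod rP -> is_rmod (fun a => t *m rP a *m s).
Proof.
move=> st ts [h1 h2 h3 h4]; split.
- by move=> a b; rewrite h1 mulmxDr mulmxDl.
- by move=> c a; rewrite h2 -scalemxAr -scalemxAl.
- by rewrite h3 mulmx1.
- by move=> a b; rewrite h4 !mulmxA -(mulmxA _ s t) st mulmx1.
Qed.

Lemma conj_hom m m' (rP : A -> 'M[k]_m) (t : 'M_(m',m)) (s : 'M_(m,m')) :
  s *m t = 1%:M -> t *m s = 1%:M ->
  is_hom rP (fun a => t *m rP a *m s) s /\ is_hom (fun a => t *m rP a *m s) rP t.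
Proof.
move=> st ts; split => a.
- by rewrite !mulmxA st mul1mx.
- by rewrite -!mulmxA st mulmx1.
Qed.

Lemma conj_proj m m' (rP : A -> 'M[k]_m) (t : 'M_(m',m)) (s : 'M_(m,m')) :
  s *m t = 1%:M -> t *m s = 1%:M -> is_projective rP -> is_projective (fun a => t *m rP a *m s).
Proof.
move=> st ts hP n n' rN rN' q h hN hN' hq fq hh.
have [hs ht] := conj_hom rP st ts.
have [l [hl lq]] := hP n n' rN rN' q (s *m h) hN hN' hq fq (hom_mul hs hh).
exists (t *m l); split; first exact: hom_mul ht hl.
by rewrite -mulmxA lq mulmxA ts mul1mx.
Qed.

Lemma pI_conj m m' (rP : A -> 'M[k]_m) : m' = m ->
  let rQ := fun a => pI m' m *m rP a *m pI m m' in
  [/\ is_hom rP rQ (pI m m'), is_hom rQ rP (pI m' m),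
      is_rmod rP -> is_rmod rQ & is_projective rP -> is_projective rQ].
Proof.
move=> e rQ.
have st : pI m m' *m pI m' m = 1%:M :> 'M[k]_m by apply: pIeq; rewrite e.
have ts : pI m' m *m pI m m' = 1%:M :> 'M[k]_m' by apply: pIeq.
have [h1 h2] := conj_hom rP st ts.
split => //; [exact: conj_rmod | exact: conj_proj].
Qed.

Lemma transport_hom J (X : cplx A J) m m' : m = m' ->
  is_hom (cact X m) (cact X m') (pI (cdim X m) (cdim X m')).
Proof. by move=> <-; rewrite pI_same; exact: hom1. Qed.

Lemma transport_g J (X Y : cplx A J) (g : cmor X Y) m m' c (M : 'M[k]_(c, cdim X m)) :
  m = m' -> M *m pI (cdim X m) (cdim X m') *m g m' *m pI (cdim Y m') (cdim Y m) = M *m g m.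
Proof. by move=> <-; rewrite !pI_same mulmx1 mulmx1. Qed.

Lemma transport_g0 J (X Y : cplx A J) (g : cmor X Y) m m' :
  m = m' -> pI (cdim X m) (cdim X m') *m g m' *m pI (cdim Y m') (cdim Y m) = g m.
Proof. by move=> <-; rewrite !pI_same mulmx1 mul1mx. Qed.

End Conj.

Section Build.
Variables (k : fieldType) (A : falgType k) (J : pred int) (X Y : cplx A J) (g : cmor X Y).
Hypothesis hg : chain_map g.
Variables (i0 : int) (p : nat) (rZ : A -> 'M[k]_p) (G : 'M[k]_(cdim X i0, p))
  (H : 'M[k]_(p, cdim Y i0)).
Hypotheses (Ji0 : i0 \in J) (rZm : is_rmod rZ) (rZp : is_projective rZ)
  (hG : is_hom (cact X i0) rZ G) (hH : is_hom rZ (cact Y i0) H) (gGH : g i0 = G *m H).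

Definition wd (n : int) : nat :=
  if n < i0 then cdim X n else if n == i0 then p else cdim Y n.

Definition actW (n : int) : A -> 'M[k]_(wd n) :=
  if n < i0 then fun a => pI (wd n) (cdim X n) *m cact X n a *m pI (cdim X n) (wd n)
  else if n == i0 then fun a => pI (wd n) p *m rZ a *m pI p (wd n)
  else fun a => pI (wd n) (cdim Y n) *m cact Y n a *m pI (cdim Y n) (wd n).

Definition dW (n : int) : 'M[k]_(wd n, wd (n + 1)) :=
  if n + 1 < i0 then pI (wd n) (cdim X n) *m cd X n *m pI (cdim X (n + 1)) (wd (n + 1))
  else if n + 1 == i0 then
    pI (wd n) (cdim X n) *m cd X n *m pI (cdim X (n + 1)) (cdim X i0) *m G *m pI p (wd (n + 1))
  else if n == i0 then
    pI (wd n) p *m H *m pI (cdim Y i0) (cdim Y n) *m cd Y n *m pI (cdim Y (n + 1)) (wd (n + 1))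
  else pI (wd n) (cdim Y n) *m cd Y n *m pI (cdim Y (n + 1)) (wd (n + 1)).

Definition uW (n : int) : 'M[k]_(cdim X n, wd n) :=
  if n < i0 then pI (cdim X n) (wd n)
  else if n == i0 then pI (cdim X n) (cdim X i0) *m G *m pI p (wd n)
  else g n *m pI (cdim Y n) (wd n).

Definition vW (n : int) : 'M[k]_(wd n, cdim Y n) :=
  if n < i0 then pI (wd n) (cdim X n) *m g n
  else if n == i0 then pI (wd n) p *m H *m pI (cdim Y i0) (cdim Y n)
  else pI (wd n) (cdim Y n).

Definition isX n := n < i0.
Definition isZ n := n == i0.
Definition isY n := ~~ (n < i0) && (n != i0).

Lemma wdX n : isX n -> wd n = cdim X n.
Proof. by rewrite /isX /wd => ->. Qed.
Lemma wdZ n : isZ n -> wd n = p.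
Proof. rewrite /isZ /wd => h; have -> : (n < i0) = false by lia. by rewrite h. Qed.
Lemma wdY n : isY n -> wd n = cdim Y n.
Proof. by rewrite /isY /wd => /andP [h1 h2]; rewrite (negbTE h1) (negbTE h2). Qed.

Lemma actWX n : isX n -> actW n = fun a => pI (wd n) (cdim X n) *m cact X n a *m pI (cdim X n) (wd n).
Proof. by rewrite /isX /actW => ->. Qed.
Lemma actWZ n : isZ n -> actW n = fun a => pI (wd n) p *m rZ a *m pI p (wd n).
Proof. rewrite /isZ /actW => h; have -> : (n < i0) = false by lia. by rewrite h. Qed.
Lemma actWY n : isY n -> actW n = fun a => pI (wd n) (cdim Y n) *m cact Y n a *m pI (cdim Y n) (wd n).
Proof. by rewrite /isY /actW => /andP [h1 h2]; rewrite (negbTE h1) (negbTE h2). Qed.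

Lemma uWX n : isX n -> uW n = pI (cdim X n) (wd n).
Proof. by rewrite /isX /uW => ->. Qed.
Lemma uWZ n : isZ n -> uW n = pI (cdim X n) (cdim X i0) *m G *m pI p (wd n).
Proof. rewrite /isZ /uW => h; have -> : (n < i0) = false by lia. by rewrite h. Qed.
Lemma uWY n : isY n -> uW n = g n *m pI (cdim Y n) (wd n).
Proof. by rewrite /isY /uW => /andP [h1 h2]; rewrite (negbTE h1) (negbTE h2). Qed.

Lemma vWX n : isX n -> vW n = pI (wd n) (cdim X n) *m g n.
Proof. by rewrite /isX /vW => ->. Qed.
Lemma vWZ n : isZ n -> vW n = pI (wd n) p *m H *m pI (cdim Y i0) (cdim Y n).
Proof. rewrite /isZ /vW => h; have -> : (n < i0) = false by lia. by rewrite h. Qed.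
Lemma vWY n : isY n -> vW n = pI (wd n) (cdim Y n).
Proof. by rewrite /isY /vW => /andP [h1 h2]; rewrite (negbTE h1) (negbTE h2). Qed.

Lemma dWX n : isX (n + 1) -> dW n = pI (wd n) (cdim X n) *m cd X n *m pI (cdim X (n + 1)) (wd (n + 1)).
Proof. by rewrite /dW /isX => ->. Qed.
Lemma dWXZ n : isZ (n + 1) -> dW n =
  pI (wd n) (cdim X n) *m cd X n *m pI (cdim X (n + 1)) (cdim X i0) *m G *m pI p (wd (n + 1)).
Proof. rewrite /dW /isZ => h; have -> : (n + 1 < i0) = false by lia. by rewrite h. Qed.
Lemma dWZY n : isZ n -> dW n =
  pI (wd n) p *m H *m pI (cdim Y i0) (cdim Y n) *m cd Y n *m pI (cdim Y (n + 1)) (wd (n + 1)).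
Proof.
rewrite /dW /isZ => h; have -> : (n + 1 < i0) = false by lia.
have -> : (n + 1 == i0) = false by lia.
by rewrite h.
Qed.
Lemma dWY n : isY n -> dW n = pI (wd n) (cdim Y n) *m cd Y n *m pI (cdim Y (n + 1)) (wd (n + 1)).
Proof.
rewrite /dW /isY => h; have -> : (n + 1 < i0) = false by lia.
have -> : (n + 1 == i0) = false by lia.
by have -> : (n == i0) = false by lia.
Qed.



Lemma cases3 n : [\/ isX n, isZ n | isY n].
Proof.
rewrite /isX /isZ /isY.
have [h|h] := boolP (n < i0); first by apply: Or31.
have [h'|h'] := boolP (n == i0); first by apply: Or32.
by apply: Or33; apply/andP.
Qed.

Lemma embX n : isX n -> [/\ is_hom (cact X n) (actW n) (pI (cdim X n) (wd n)),
  is_hom (actW n) (cact X n) (pI (wd n) (cdim X n)), is_rmod (actW n) & is_projective (actW n)].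
Proof.
move=> h; rewrite (actWX h); have [a b c d] := pI_conj (cact X n) (wdX h).
split => //; [exact: c (cact_rmod X n) | exact: d (@cact_proj _ _ _ X n)].
Qed.

Lemma embZ n : isZ n -> [/\ is_hom rZ (actW n) (pI p (wd n)),
  is_hom (actW n) rZ (pI (wd n) p), is_rmod (actW n) & is_projective (actW n)].
Proof.
move=> h; rewrite (actWZ h); have [a b c d] := pI_conj rZ (wdZ h).
split => //; [exact: c | exact: d].
Qed.

Lemma embY n : isY n -> [/\ is_hom (cact Y n) (actW n) (pI (cdim Y n) (wd n)),
  is_hom (actW n) (cact Y n) (pI (wd n) (cdim Y n)), is_rmod (actW n) & is_projective (actW n)].
Proof.
move=> h; rewrite (actWY h); have [a b c d] := pI_conj (cact Y n) (wdY h).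
split => //; [exact: c (cact_rmod Y n) | exact: d (@cact_proj _ _ _ Y n)].
Qed.

Lemma actW_rmod n : is_rmod (actW n).
Proof. by case: (cases3 n) => h; [case: (embX h) | case: (embZ h) | case: (embY h)]. Qed.

Lemma actW_proj n : is_projective (actW n).
Proof. by case: (cases3 n) => h; [case: (embX h) | case: (embZ h) | case: (embY h)]. Qed.

Lemma wd_vanish n : n \notin J -> wd n = 0%N.
Proof.
move=> nJ; rewrite /wd; case: ifP => _; first exact: cvanish.
case: ifP => [/eqP e|_]; last exact: cvanish.
by rewrite e Ji0 in nJ.
Qed.

Lemma dW_hom n : is_hom (actW n) (actW (n + 1)) (dW n).
Proof.
case: (cases3 (n + 1)) => h.
- have hn : isX n by move: h; rewrite /isX; lia.
  rewrite (dWX h); have [_ e1 _ _] := embX hn; have [e2 _ _ _] := embX h.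
  exact: hom_mul (hom_mul e1 (cd_hom X n)) e2.
- have hn : isX n by move: h; rewrite /isX /isZ; lia.
  rewrite (dWXZ h); have [_ e1 _ _] := embX hn; have [e2 _ _ _] := embZ h.
  have T := transport_hom X (eqP h).
  exact: hom_mul (hom_mul (hom_mul (hom_mul e1 (cd_hom X n)) T) hG) e2.
- have [e2 _ _ _] := embY h.
  have [hz|hz] := boolP (isZ n).
    rewrite (dWZY hz); have [_ e1 _ _] := embZ hz.
    have T := transport_hom Y (esym (eqP hz)).
    exact: hom_mul (hom_mul (hom_mul (hom_mul e1 hH) T) (cd_hom Y n)) e2.
  have hy : isY n by move: h hz; rewrite /isY /isZ; lia.
  rewrite (dWY hy); have [_ e1 _ _] := embY hy.
  exact: hom_mul (hom_mul e1 (cd_hom Y n)) e2.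
Qed.

Lemma dW_rad n : radical_hom (actW (n + 1)) (dW n).
Proof.
case: (cases3 (n + 1)) => h.
- rewrite (dWX h); have [e2 _ _ _] := embX h.
  exact: rad_mulr e2 (rad_mull _ (@cd_rad _ _ _ X n)).
- rewrite (dWXZ h); have [e2 _ _ _] := embZ h.
  have T := transport_hom X (eqP h).
  exact: rad_mulr e2 (rad_mulr hG (rad_mulr T (rad_mull _ (@cd_rad _ _ _ X n)))).
- have [e2 _ _ _] := embY h.
  have [hz|hz] := boolP (isZ n).
    rewrite (dWZY hz).
    exact: rad_mulr e2 (rad_mull _ (@cd_rad _ _ _ Y n)).
  have hy : isY n by move: h hz; rewrite /isY /isZ; lia.
  rewrite (dWY hy).
  exact: rad_mulr e2 (rad_mull _ (@cd_rad _ _ _ Y n)).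
Qed.

Lemma dW_dd n : dW n *m dW (n + 1) = 0.
Proof.
case: (cases3 (n + 1 + 1)) => h2.
- have h1 : isX (n + 1) by move: h2; rewrite /isX; lia.
  rewrite (dWX h1) (dWX h2) !mulmxA mulpI_r; last exact: esym (wdX h1).
  by rewrite -(mulmxA _ (cd X n)) cdd mulmx0 !mul0mx.
- have h1 : isX (n + 1) by move: h2; rewrite /isX /isZ; lia.
  rewrite (dWX h1) (dWXZ h2) !mulmxA mulpI_r; last exact: esym (wdX h1).
  by rewrite -(mulmxA _ (cd X n)) cdd mulmx0 !mul0mx.
- have [h1|h1] := boolP (isZ (n + 1)).
    rewrite (dWXZ h1) (dWZY h1) !mulmxA mulpI_r; last exact: esym (wdZ h1).
    rewrite -(mulmxA _ G H) -gGH (transport_g g _ (eqP h1)).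
    rewrite -(mulmxA _ (cd X n)) hg.2 mulmxA -(mulmxA _ (cd Y n)) cdd.
    by rewrite mulmx0 !mul0mx.
  have hy1 : isY (n + 1) by move: h1 h2; rewrite /isY /isZ; lia.
  rewrite (dWY hy1).
  have [hz|hz] := boolP (isZ n).
    rewrite (dWZY hz) !mulmxA mulpI_r; last exact: esym (wdY hy1).
    by rewrite -(mulmxA _ (cd Y n)) cdd mulmx0 !mul0mx.
  have hy : isY n by move: hy1 hz; rewrite /isY /isZ; lia.
  rewrite (dWY hy) !mulmxA mulpI_r; last exact: esym (wdY hy1).
  by rewrite -(mulmxA _ (cd Y n)) cdd mulmx0 !mul0mx.
Qed.

Definition W : cplx A J :=
  @Cplx k A J wd actW dW actW_rmod actW_proj wd_vanish dW_hom dW_rad dW_dd.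



Lemma uW_chain : chain_map (Y := W) uW.
Proof.
split => n.
  case: (cases3 n) => h.
  - by rewrite (uWX h); case: (embX h).
  - rewrite (uWZ h); have [e _ _ _] := embZ h.
    exact: hom_mul (hom_mul (transport_hom X (eqP h)) hG) e.
  - rewrite (uWY h); have [e _ _ _] := embY h.
    exact: hom_mul (hg.1 n) e.
rewrite /=; case: (cases3 (n + 1)) => h.
- have hn : isX n by move: h; rewrite /isX; lia.
  rewrite (uWX h) (uWX hn) (dWX h) !mulmxA mulpI_l //; exact: esym (wdX hn).
- have hn : isX n by move: h; rewrite /isX /isZ; lia.
  rewrite (uWZ h) (uWX hn) (dWXZ h) !mulmxA mulpI_l //; exact: esym (wdX hn).
- have [hz|hz] := boolP (isZ n).
    rewrite (uWY h) (uWZ hz) (dWZY hz) !mulmxA mulpI_r; last exact: esym (wdZ hz).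
    rewrite -(mulmxA _ G H) -gGH (transport_g0 g (eqP hz)).
    by rewrite hg.2.
  have hy : isY n by move: h hz; rewrite /isY /isZ; lia.
  rewrite (uWY h) (uWY hy) (dWY hy) !mulmxA mulpI_r; last exact: esym (wdY hy).
  by rewrite hg.2.
Qed.

Lemma vW_chain : chain_map (X := W) vW.
Proof.
split => n.
  case: (cases3 n) => h.
  - rewrite (vWX h); have [_ e _ _] := embX h.
    exact: hom_mul e (hg.1 n).
  - rewrite (vWZ h); have [_ e _ _] := embZ h.
    exact: hom_mul (hom_mul e hH) (transport_hom Y (esym (eqP h))).
  - by rewrite (vWY h); case: (embY h).
rewrite /=; case: (cases3 (n + 1)) => h.
- have hn : isX n by move: h; rewrite /isX; lia.
  rewrite (dWX h) (vWX h) (vWX hn) !mulmxA mulpI_r; last exact: esym (wdX h).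
  by rewrite -(mulmxA _ (cd X n)) hg.2 mulmxA.
- have hn : isX n by move: h; rewrite /isX /isZ; lia.
  rewrite (dWXZ h) (vWZ h) (vWX hn) !mulmxA mulpI_r; last exact: esym (wdZ h).
  rewrite -(mulmxA _ G H) -gGH (transport_g g _ (eqP h)).
  by rewrite -(mulmxA _ (cd X n)) hg.2 mulmxA.
- have [hz|hz] := boolP (isZ n).
    rewrite (dWZY hz) (vWY h) (vWZ hz) ?mulmxA mulpI_r' //; exact: esym (wdY h).
  have hy : isY n by move: h hz; rewrite /isY /isZ; lia.
  rewrite (dWY hy) (vWY h) (vWY hy) ?mulmxA mulpI_r' //; exact: esym (wdY h).
Qed.

Lemma uv_eq n : g n = uW n *m vW n.
Proof.
case: (cases3 n) => h.
- by rewrite (uWX h) (vWX h) mulmxA mulpI_l //; exact: esym (wdX h).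
- rewrite (uWZ h) (vWZ h) !mulmxA mulpI_r; last exact: esym (wdZ h).
  by rewrite -(mulmxA _ G H) -gGH (transport_g0 g (eqP h)).
- by rewrite (uWY h) (vWY h) mulpI_r' //; exact: esym (wdY h).
Qed.

Lemma factor_split : irreducible_C g ->
  split_mono (cact X i0) rZ G \/ split_epi rZ (cact Y i0) H.
Proof.
case=> _ _ _ irr.
have hZ : isZ i0 by rewrite /isZ.
case: (irr W uW vW uW_chain vW_chain uv_eq) => [[r [[hr _] ur]]|[s [[hs _] sv]]].
- left; exists (pI p (wd i0) *m r i0); split.
    have [e _ _ _] := embZ hZ; exact: hom_mul e (hr i0).
  by have := ur i0; rewrite (uWZ hZ) pI_same mul1mx -mulmxA.
- right; exists (s i0 *m pI (wd i0) p); split.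
    have [_ e _ _] := embZ hZ; exact: hom_mul (hs i0) e.
  by have := sv i0; rewrite (vWZ hZ) pI_same mulmx1 !mulmxA.
Qed.

End Build.

Theorem lemma2 (k : fieldType) (A : falgType k) (HA : ~ semisimple_alg A)
  (J : pred int) (HJ : is_interval J)
  (X Y X' Y' : cplx A J) (f : cmor X Y) (g : cmor X' Y')
  (hf : chain_map f) (hg : chain_map g)
  (alpha : cmor X X') (beta : cmor Y Y')
  (halpha : iso_K alpha) (hbeta : iso_K beta)
  (hcomm : homotopic (ccomp alpha g) (ccomp f beta)) :
  (smonic f -> smonic g) /\ (sepic f -> sepic g) /\
  (irreducible_C f -> irreducible_C g -> sirreducible f -> sirreducible g).
Proof.
have key : forall n,
  [/\ split_mono (cact X n) (cact Y n) (f n) -> split_mono (cact X' n) (cact Y' n) (g n),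
      split_epi (cact X n) (cact Y n) (f n) -> split_epi (cact X' n) (cact Y' n) (g n),
      split_mono (cact X' n) (cact Y' n) (g n) -> split_mono (cact X n) (cact Y n) (f n) &
      split_epi (cact X' n) (cact Y' n) (g n) -> split_epi (cact X n) (cact Y n) (f n)].
  move=> n.
  have [ai [hai aai aia]] := iso_inv halpha n.
  have [bi [hbi bbi bib]] := iso_inv hbeta n.
  have ha : is_hom (cact X n) (cact X' n) (alpha n) by exact: halpha.1.1.
  have hb : is_hom (cact Y n) (cact Y' n) (beta n) by exact: hbeta.1.1.
  have hfn : is_hom (cact X n) (cact Y n) (f n) by exact: hf.1.
  have hgn : is_hom (cact X' n) (cact Y' n) (g n) by exact: hg.1.
  have re : radical_hom (cact Y' n) (alpha n *m g n - f n *m beta n).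
    exact: (homotopic_rad hcomm (m:=n)).
  have rr : radical_hom (cact Y n) (ai *m f n - g n *m bi).
    by apply: (rev_rad (a:=alpha n) (ai:=ai) (b:=beta n) (bi:=bi) (F:=f n) (F':=g n)).
  split => s.
  - by apply: (transfer_mono (a:=alpha n) (ai:=ai) (b:=beta n) (bi:=bi) (F:=f n) (F':=g n)).
  - by apply: (transfer_epi (a:=alpha n) (ai:=ai) (b:=beta n) (bi:=bi) (F:=f n) (F':=g n)).
  - by apply: (transfer_mono (a:=ai) (ai:=alpha n) (b:=bi) (bi:=beta n) (F:=g n) (F':=f n)).
  - by apply: (transfer_epi (a:=ai) (ai:=alpha n) (b:=bi) (bi:=beta n) (F:=g n) (F':=f n)).
split; first by move=> sf n; case: (key n) => h _ _ _; exact: h.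
split; first by move=> sf n; case: (key n) => _ h _ _; exact: h.
move=> irf irg [i0 [Hiff Hlt Hgt]].
have irf0 : irreducible_P (cact X i0) (cact Y i0) (f i0) by apply/Hiff.
have Ji0 : i0 \in J.
  apply/negPn/negP => nJ; case: irf0 => _ nsm _ _; apply: nsm.
  exists 0; split; first by move=> a; rewrite mulmx0 mul0mx.
  have e := cvanish X nJ; move: (f i0 *m 0) (1%:M : 'M_(cdim X i0)).
  by rewrite e => M N; rewrite !thinmx0.
exists i0; split.
- move=> n; split.
  + case=> _ nsm nse _.
    case: (ltgtP n i0) => // [lt|gt].
    * by exfalso; apply: nse; case: (key n) => _ h _ _; apply: h; exact: Hlt.
    * by exfalso; apply: nsm; case: (key n) => h _ _ _; apply: h; exact: Hgt.
  + move=> ->; case: irf0 => _ nsm nse _; split.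
    * exact: hg.1.
    * by move=> sm; apply: nsm; case: (key i0) => _ _ h _; exact: h.
    * by move=> se; apply: nse; case: (key i0) => _ _ _ h; exact: h.
    * move=> p rZ G H rZm rZp hG hH e.
      exact: (factor_split hg Ji0 rZm rZp hG hH e irg).
- by move=> n lt; case: (key n) => _ h _ _; apply: h; exact: Hlt.
- by move=> n gt; case: (key n) => h _ _ _; apply: h; exact: Hgt.
Qed.
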